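(* For every cube $K=[-q\mathbf 1,q\mathbf 1]$ ($q>0$) and every $\sigma\in\Sigma$, the Lebesgue measure of $S_K(\sigma)$ satisfies $|S_K(\sigma)|\le 2^{d+1}\psi_K(\sigma)$.
   Context: Order conventions: for $x,y\in\mathbb R^d$, $x\le y$ iff $x_i\le y_i$ for all $i$; $\mathbf 1=(1,\dots,1)$; $|x|_\infty=\max_i|x_i|$; $x!=x_1x_2\cdots x_d$; $[a,b]=\{x:a\le x\le b\}$. Fix $d\ge2$. $\mathbb Z^*=\mathbb Z\cup\{\pm\infty\}$. The state space $\Sigma$ is the set of functions $\sigma:\mathbb R^d\to\mathbb Z^*$ such that (i) $x\le y$ implies $\sigma(x)\le\sigma(y)$; (ii) for every cube $[-q\mathbf 1,q\mathbf 1]$ there are finite partitions $-q=s_i^0<\dots<s_i^{m_i}=q$ of each coordinate axis such that $\sigma$ is constant on each rectangle $\prod_i[s_i^{k_i},s_i^{k_i+1})$; (iii) for every $b\in\mathbb R^d$, $\lim_{M\to\infty}\sup\{|y|_\infty^{-d/(d+1)}\sigma(y):y\le b,|y|_\infty\ge M\}=-\infty$. For $\sigma\in\Sigma$ and $x\in\mathbb R^d$: $S_x(\sigma)=\{y: y\le x,\ \sigma(y)=\sigma(x)\}$ if $\sigma(x)$ is finite, and $S_x(\sigma)=\emptyset$ if $\sigma(x)=\pm\infty$; $S_K(\sigma)=\bigcup_{x\in K}S_x(\sigma)$. For $b\in\mathbb R^d$, $h\in\mathbb Z$, $y^{b,h}(\sigma)$ is the maximal point $y\le b$ such that the rectangle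 $[y,b]$ contains $\{x\le b:\sigma(x)\ge h\}$ (and $y^{b,h}(\sigma)=b$ if this set is empty). With $K=[-q\mathbf 1,q\mathbf 1]$ write $y^h=y^{q\mathbf 1,h}(\sigma)$ and $\lambda_k(\sigma)=\sup_{-\infty<h\le k-2}(q\mathbf 1-y^h)!\,(k-h)^{-(d+1)}$ for $k\in\mathbb Z$. $I(K,\sigma)=\min\{\sigma(x):x\in K,\sigma(x)\text{ finite}\}$, $J(K,\sigma)=\max\{\sigma(x):x\in K,\sigma(x)\text{ finite}\}$ (if $\sigma=\pm\infty$ on all of $K$, set $I=\infty=-J$). Finally $\psi_K(\sigma)=\big(\sum_{k=I(K,\sigma)+1}^{J(K,\sigma)+1}\lambda_k^2(\sigma)\big)^{1/2}$ (empty sum $=0$). *)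

(* Defs.v *)
From HB Require Import structures.
From mathcomp Require Import all_boot all_order all_algebra.
From mathcomp Require Import all_classical all_reals.
From mathcomp Require Import all_analysis.
Set Implicit Arguments. Unset Strict Implicit. Unset Printing Implicit Defensive.
Import Order.TTheory GRing.Theory Num.Theory numFieldNormedType.Exports.
Local Open Scope classical_set_scope.
Local Open Scope ring_scope.

Section Defs.
Variables (R : realType) (d : nat).

Definition vle (x y : 'I_d -> R) : Prop := forall i, x i <= y i.

Definition supnorm (x : 'I_d -> R) : R := \big[Num.max/0]_(i < d) `|x i|.

Definition vfact (x : 'I_d -> R) : R := \prod_(i < d) x i.

Definition rect (a b : 'I_d -> R) : set ('I_d -> R) := [set x | vle a x /\ vle x b].

Definition cst (q : R) : 'I_d -> R := fun _ => q.

Definition cube (q : R) : set ('I_d -> R) := rect (cst (- q)) (cst q).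

Definition zs2er (z : \bar int) : \bar R := er_map (fun n : int => n%:~R) z.

Definition sigma_monotone (sigma : ('I_d -> R) -> \bar int) : Prop :=
  forall x y, vle x y -> (sigma x <= sigma y)%E.

Definition sigma_piecewise_const (sigma : ('I_d -> R) -> \bar int) : Prop :=
  forall q : R, 0 < q ->
  exists s : 'I_d -> seq R,
    (forall i, [/\ (1 < size (s i))%N, head 0 (s i) = - q,
                   last 0 (s i) = q & sorted <%R (s i)]) /\
    (forall k : 'I_d -> nat, (forall i, (k i).+1 < size (s i))%N ->
       forall x y,
         (forall i, nth 0 (s i) (k i) <= x i < nth 0 (s i) (k i).+1) ->
         (forall i, nth 0 (s i) (k i) <= y i < nth 0 (s i) (k i).+1) ->
         sigma x = sigma y).

Definition sigma_decay (sigma : ('I_d -> R) -> \bar int) : Prop :=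
  forall b : 'I_d -> R,
    (fun M : R => ereal_sup
       [set ((supnorm y `^ (- (d%:R / (d.+1)%:R)))%:E * zs2er (sigma y))%E
       | y in [set y | vle y b /\ M <= supnorm y]]) @ +oo --> -oo%E.

Definition inSigma (sigma : ('I_d -> R) -> \bar int) : Prop :=
  [/\ sigma_monotone sigma, sigma_piecewise_const sigma & sigma_decay sigma].

Definition S_pt (sigma : ('I_d -> R) -> \bar int) (x : 'I_d -> R) : set ('I_d -> R) :=
  match sigma x with
  | EFin _ => [set y | vle y x /\ sigma y = sigma x]
  | _ => set0
  end.

Definition S_set (K : set ('I_d -> R)) (sigma : ('I_d -> R) -> \bar int) : set ('I_d -> R) :=
  \bigcup_(x in K) S_pt sigma x.

(* Defined as the greatest element of the set of admissible y (default b if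
   there is none, which cannot happen for sigma in Sigma). *)
Definition ybh (sigma : ('I_d -> R) -> \bar int) (b : 'I_d -> R) (h : int) : 'I_d -> R :=
  let adm := [set y | vle y b /\
                 [set x | vle x b /\ (h%:E <= sigma x)%E] `<=` rect y b] in
  xget b [set y | adm y /\ forall y', adm y' -> vle y' y].

Definition lambda (q : R) (sigma : ('I_d -> R) -> \bar int) (k : int) : \bar R :=
  ereal_sup [set (vfact (fun i => q - ybh sigma (cst q) h i) * ((k - h)%:~R ^- d.+1))%:E
            | h in [set h : int | h <= k - 2]].

Definition fin_vals (K : set ('I_d -> R)) (sigma : ('I_d -> R) -> \bar int) : set int :=
  [set z : int | exists2 x, K x & sigma x = z%:E].

Definition I_K (K : set ('I_d -> R)) (sigma : ('I_d -> R) -> \bar int) : int :=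
  xget 0 [set z | fin_vals K sigma z /\ forall w, fin_vals K sigma w -> z <= w].
Definition J_K (K : set ('I_d -> R)) (sigma : ('I_d -> R) -> \bar int) : int :=
  xget 0 [set z | fin_vals K sigma z /\ forall w, fin_vals K sigma w -> w <= z].

End Defs.

Definition int_range (a b : int) : seq int :=
  [seq a + (j%:Z) | j <- iota 0 (if (a <= b) then absz (b - a + 1) else 0)].

Definition esqrt (R : realType) (x : \bar R) : \bar R :=
  match x with
  | EFin r => (Num.sqrt r)%:E
  | +oo%E => +oo%E
  | -oo%E => -oo%E
  end.

(* psi_K(sigma) with K = [-q1,q1]; if sigma has no finite value on K then
   I = +oo, J = -oo and the sum is empty (= 0). *)
Definition psi (R : realType) (d : nat) (q : R) (sigma : ('I_d -> R) -> \bar int) : \bar R :=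
  let K := cube q in
  if asbool (fin_vals K sigma = set0) then 0%E
  else esqrt (\sum_(k <- int_range (I_K K sigma + 1) (J_K K sigma + 1))
                (lambda q sigma k * lambda q sigma k)%E)%E.

Definition box_vol (R : realType) (d : nat) (a b : 'I_d -> R) : R :=
  \prod_(i < d) Num.max (b i - a i) 0.

Definition leb_outer (R : realType) (d : nat) (A : set ('I_d -> R)) : \bar R :=
  ereal_inf [set s : \bar R | exists a b : nat -> 'I_d -> R,
     A `<=` \bigcup_n rect (a n) (b n) /\
     s = (\sum_(0 <= n <oo) (box_vol (a n) (b n))%:E)%E].

(* Main.v *)
Require Import Defs.
From HB Require Import structures.
From mathcomp Require Import all_boot all_order all_algebra.
From mathcomp Require Import all_classical all_reals.
From mathcomp Require Import all_analysis.
Import Order.TTheory GRing.Theory Num.Theory numFieldNormedType.Exports.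
Local Open Scope classical_set_scope.
Local Open Scope ring_scope.

Lemma find_idx (R : realType) (s : seq R) (t : R) :
  (1 < size s)%N -> head 0 s <= t -> t < last 0 s ->
  exists j, (j.+1 < size s)%N /\ nth 0 s j <= t < nth 0 s j.+1.
Proof.
elim: s => [//|a s IH] /=.
case: s IH => [//|b s] IH _ ha hl.
have [tb|bt] := ltP t b.
  by exists 0%N; rewrite /= ha tb.
case: s IH hl => [|c s] IH hl.
  by move: hl => /=; rewrite ltNge bt.
have [j [hj1 hj2]] := IH erefl bt hl.
by exists j.+1; split.
Qed.

Lemma int_min (S : set int) (z0 : int) (B : int) : S z0 ->
  (forall z, S z -> `|z| <= B) -> exists m, S m /\ forall w, S w -> m <= w.
Proof.
move=> Sz0 hB.
pose P := fun n : nat => `[< S (n%:Z - B) >].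
have exP : exists n, P n.
  exists (absz (z0 + B)); apply/asboolP.
  have := hB _ Sz0; rewrite ler_norml => /andP[h1 h2].
  rewrite gez0_abs; last by rewrite -lerBlDr sub0r.
  by rewrite addrK.
case: (ex_minnP exP) => m /asboolP Sm hmin.
exists (m%:Z - B); split => // w Sw.
have := hB _ Sw; rewrite ler_norml => /andP[h1 h2].
have Pw : P (absz (w + B)).
  apply/asboolP; rewrite gez0_abs; last by rewrite -lerBlDr sub0r.
  by rewrite addrK.
have := hmin _ Pw.
rewrite -(lez_nat) gez0_abs; last by rewrite -lerBlDr sub0r.
by rewrite lerBlDr.
Qed.

Lemma int_max (S : set int) (z0 : int) (B : int) : S z0 ->
  (forall z, S z -> `|z| <= B) -> exists m, S m /\ forall w, S w -> w <= m.
Proof.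
move=> Sz0 hB.
have h1 : (fun z => S (- z)) (- z0) by rewrite /= opprK.
have h2 : forall z, (fun z => S (- z)) z -> `|z| <= B by move=> z /hB; rewrite normrN.
have [m [Sm hm]] := @int_min (fun z => S (- z)) (- z0) B h1 h2.
exists (- m); split => // w Sw; rewrite -lerN2 opprK; apply: hm; by rewrite opprK.
Qed.


Lemma fin_bounded (R : realType) (d : nat) (q : R) (hq : 0 < q)
  (sigma : ('I_d -> R) -> \bar int) : sigma_piecewise_const sigma ->
  exists B : int, forall z, fin_vals (cube q) sigma z -> `|z| <= B.
Proof.
move=> hpc; have [s [hs hk]] := hpc (q + 1) (addr_gt0 hq ltr01).
pose N := (\max_(i < d) size (s i))%N.
pose corner (jf : {ffun 'I_d -> 'I_N.+1}) : 'I_d -> R := fun i => nth 0 (s i) (jf i).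
pose f jf : int := if sigma (corner jf) is EFin v then v else 0.
exists (\sum_jf `|f jf|).
move=> z [x [Kx1 Kx2] sxz].
have : forall i, exists j, (j.+1 < size (s i))%N /\ nth 0 (s i) j <= x i < nth 0 (s i) j.+1.
  move=> i; have [h1 h2 h3 _] := hs i; apply: find_idx => //.
    rewrite h2; apply: le_trans (Kx1 i); rewrite /cst lerN2 lerDl ler01 //.
  rewrite h3; apply: le_lt_trans (Kx2 i) _; rewrite /cst ltrDl ltr01 //.
case/choice => j hj.
pose jf := [ffun i => inord (j i) : 'I_N.+1].
have jfE : forall i, nat_of_ord (jf i) = j i.
  move=> i; rewrite ffunE inordK //; apply: (@leq_trans (size (s i))).
    by apply: ltnW; case: (hj i).
  exact: (leq_trans (leq_bigmax i) (leqnSn _)).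
have eqs : sigma x = sigma (corner jf).
  apply: (hk j (fun i => (hj i).1)) => i; first exact: (hj i).2.
  rewrite /corner jfE lexx /=; case/andP: (hj i).2 => a b; exact: le_lt_trans a b.
have fz : f jf = z by rewrite /f -eqs sxz.
by rewrite -fz (bigD1 jf) //= lerDl sumr_ge0.
Qed.


Lemma decay_bound (R : realType) (d : nat) (sigma : ('I_d -> R) -> \bar int) :
  sigma_decay sigma -> forall b (h : int), exists M : R, forall y, vle y b ->
  (h%:E <= sigma y)%E -> supnorm y < M.
Proof.
move=> hdec b h.
have := hdec b; move/cvgeNyPle => /(_ (- (`|h|%:~R + 1))).
move=> [M0 [M0r hM0]].
exists (Num.max (M0 + 1) 1) => y yb hy.
rewrite ltNge; apply/negP => hM.
have hM0' := hM0 (Num.max (M0 + 1) 1).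
have : (M0 < Num.max (M0 + 1) 1) by rewrite lt_max ltrDl ltr01.
move/hM0' => /= hsup.
set e := ((supnorm y `^ (- (d%:R / (d.+1)%:R)))%:E * zs2er R (sigma y))%E.
have he : (e <= (- (`|h|%:~R + 1))%:E)%E.
  apply: le_trans hsup; apply: ereal_sup_ubound; exists y => //.
have s1 : 1 <= supnorm y by apply: le_trans hM; rewrite le_max lexx orbT.
set c := supnorm y `^ (- (d%:R / (d.+1)%:R)).
have c0 : 0 < c by apply: powR_gt0; apply: lt_le_trans s1.
have c1 : c <= 1.
  have := ler_powR s1; move=> /(_ (- (d%:R / (d.+1)%:R)) 0).
  rewrite powRr0; apply; rewrite oppr_le0 divr_ge0 //.
move: he hy; rewrite /e /zs2er; case: (sigma y) => [v| |] //=.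
  rewrite lee_fin => he hv; rewrite lee_fin in hv.
  have hv' : (h%:~R : R) <= v%:~R by rewrite ler_int.
  have hh : - `|h|%:~R <= (h%:~R : R) by rewrite -intrN ler_int lerNl -normrN ler_norm.
  move: he; apply/negP; rewrite -ltNge.
  have [v0|v0] := leP 0 (v%:~R : R).
    apply: (@lt_le_trans _ _ 0); last by rewrite mulr_ge0 // ltW.
    by rewrite oppr_lt0 ltr_wpDl.
  apply: (@lt_le_trans _ _ (v%:~R)).
    apply: lt_le_trans hv'; apply: lt_le_trans hh; rewrite ltrN2 ltrDl ltr01 //.
  rewrite -[X in X <= _]mul1r; apply: ler_wnM2r => //; exact: ltW.
move=> he _; move: he; rewrite gt0_muley ?lte_fin //.
Qed.


Lemma ybh_le (R : realType) (d : nat) (sigma : ('I_d -> R) -> \bar int) b h :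
  vle (ybh sigma b h) b.
Proof.
rewrite /ybh; set P := (X in xget _ X).
have [ex|nex] := pselect (exists y, P y).
  by have [[]] := xgetPex b ex.
rewrite xgetPN; first by move=> i.
by move=> y Py; apply: nex; exists y.
Qed.

Lemma ybh_spec (R : realType) (d : nat) (sigma : ('I_d -> R) -> \bar int) :
  sigma_decay sigma -> forall b h,
  [set x | vle x b /\ (h%:E <= sigma x)%E] `<=` rect (ybh sigma b h) b.
Proof.
move=> hdec b h.
rewrite /ybh; set S := [set x | vle x b /\ (h%:E <= sigma x)%E].
set P := (X in xget _ X).
suff [y Py] : exists y, P y by have [[_ ]] := xgetPex b (ex_intro _ y Py).
have [[x0 Sx0]|nS] := pselect (S !=set0); last first.
  exists b; split; first by split => // x Sx; exfalso; apply: nS; exists x.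
  by move=> y' [].
have [M hM] := @decay_bound R d sigma hdec b h.
pose E i := [set x i | x in S].
have lbE : forall i, lbound (E i) (- M).
  move=> i t [x Sx <-].
  have hx := hM x Sx.1 Sx.2.
  have : `|x i| <= supnorm x by rewrite /supnorm; exact: (le_bigmax _ (fun i => `|x i|) i).
  move=> hn; rewrite lerNl; apply: ltW; apply: le_lt_trans hx.
  by apply: le_trans hn; rewrite -normrN ler_norm.
have neE : forall i, E i !=set0 by move=> i; exists (x0 i); exists x0.
exists (fun i => inf (E i)); split.
  split.
    move=> i; apply: le_trans (Sx0.1 i).
    by apply: (ge_inf (ex_intro _ _ (lbE i))); exists x0.
  move=> x Sx; split; last exact: Sx.1; move=> i.
  by apply: (ge_inf (ex_intro _ _ (lbE i))); exists x.
move=> y' [y'b hy'] i; apply: lb_le_inf => // t [x Sx <-].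
by have [] := hy' x Sx.
Qed.


Lemma box_vol_ge0 (R : realType) (d : nat) (a b : 'I_d -> R) : 0 <= box_vol a b.
Proof. by apply: prodr_ge0 => i _; rewrite le_max lexx orbT. Qed.

Lemma leb_rect (R : realType) (d : nat) (hd : (0 < d)%N) (A : set ('I_d -> R)) a b :
  A `<=` rect a b -> (leb_outer A <= (box_vol a b)%:E)%E.
Proof.
move=> hA; apply: ereal_inf_lbound.
exists (fun n => if n == 0%N then a else cst 0), (fun n => if n == 0%N then b else cst 0).
split.
  by move=> x /hA Ax; exists 0%N.
rewrite (@nneseries_split R _ 0 1); last by move=> k _; rewrite lee_fin box_vol_ge0.
rewrite add0n big_nat1 /= eseries0 ?adde0 // => i hi _.
rewrite (negbTE (lt0n_neq0 hi)).
rewrite /box_vol; case: d hd {A a b hA} => [//|d'] _.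
by rewrite big_ord_recl subrr maxxx mul0r.
Qed.




Lemma vfact_ge0 (R : realType) (d : nat) (q : R) (sigma : ('I_d -> R) -> \bar int) h :
  0 <= vfact (fun i => q - ybh sigma (cst q) h i).
Proof. by apply: prodr_ge0 => i _; rewrite subr_ge0; exact: (@ybh_le R d sigma (cst q) h i). Qed.

Lemma lambda_ge0 (R : realType) (d : nat) (q : R) (sigma : ('I_d -> R) -> \bar int) k :
  (0 <= lambda q sigma k)%E.
Proof.
apply: le_trans (ereal_sup_ubound _); last first.
  by exists (k - 2) => //=; rewrite /= lexx.
rewrite lee_fin mulr_ge0 ?vfact_ge0 // invr_ge0 exprn_ge0 //.
by rewrite opprB addrC subrK.
Qed.

Lemma esqrt_ge (R : realType) (l r : \bar R) : (0 <= l)%E -> (0 <= r)%E ->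
  (l <= esqrt (l * l + r))%E.
Proof.
case: l => [x| |] // x0; last first.
  by move=> r0; rewrite mulyy addye // gt_eqF // (lt_le_trans _ r0) // ltNye.
rewrite lee_fin in x0.
case: r => [t| |] //= t0; last by rewrite leey.
rewrite lee_fin in t0 *.
rewrite -{1}(ger0_norm x0) -sqrtr_sqr; apply: ler_wsqrtr; rewrite expr2 lerDl //.
Qed.

Theorem lemma7p2 (R : realType) (d : nat) (hd : (2 <= d)%N) (q : R) (hq : 0 < q)
  (sigma : ('I_d -> R) -> \bar int) (hsigma : inSigma sigma) :
  (leb_outer (S_set (cube q) sigma) <= (2 ^+ d.+1)%:E * psi q sigma)%E.
Proof.
have d0 : (0 < d)%N by apply: leq_trans hd.
case: hsigma => hmon hpc hdec.
rewrite /psi; case: (asboolP (fin_vals (cube q) sigma = set0)) => [e|ne].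
  rewrite mule0; apply: le_trans (@leb_rect R d d0 _ (cst 0) (cst 0) _) _.
    move=> z [x Kx]; rewrite /S_pt; case hx: (sigma x) => [v||] // _.
    have : fin_vals (cube q) sigma v by exists x.
    by rewrite e.
  rewrite /box_vol; case: d hd {d0 hmon hpc hdec e sigma} => [//|d'] _.
  by rewrite big_ord_recl subrr maxxx mul0r.
have /set0P [z0 hz0] : fin_vals (cube q) sigma != set0 by apply/eqP.
have [B hB] := @fin_bounded R d q hq sigma hpc.
set Iv := I_K (cube q) sigma; set Jv := J_K (cube q) sigma.
have [HI1 HI2] : fin_vals (cube q) sigma Iv /\ forall w, fin_vals (cube q) sigma w -> Iv <= w.
  exact: (xgetPex 0 (@int_min _ z0 B hz0 hB)).
have [HJ1 HJ2] : fin_vals (cube q) sigma Jv /\ forall w, fin_vals (cube q) sigma w -> w <= Jv.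
  exact: (xgetPex 0 (@int_max _ z0 B hz0 hB)).
have IJ : Iv <= Jv := HJ2 _ HI1.
set y := ybh sigma (cst q) (Iv - 1).
have step1 : (leb_outer (S_set (cube q) sigma) <= (box_vol y (cst q))%:E)%E.
  apply: leb_rect => // z [x Kx]; rewrite /S_pt; case hx: (sigma x) => [v||] // [zx sz].
  have Iv_v : Iv <= v by apply: HI2; exists x.
  apply: (@ybh_spec R d sigma hdec); split.
    by move=> i; apply: le_trans (zx i) (Kx.2 i).
  by rewrite sz lee_fin lerBlDr (le_trans Iv_v) // lerDl.
have step2 : box_vol y (cst q) = vfact (fun i => q - y i).
  apply: eq_bigr => i _; apply/max_idPl; rewrite subr_ge0.
  exact: (@ybh_le R d sigma (cst q) (Iv - 1) i).
have elt : ((vfact (fun i => q - y i) * (((Iv + 1) - (Iv - 1))%:~R ^- d.+1))%:E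
            <= lambda q sigma (Iv + 1))%E.
  apply: ereal_sup_ubound; exists (Iv - 1) => //=.
  by rewrite -addrA.
have two : ((Iv + 1) - (Iv - 1)) = 2 :> int by rewrite opprB addrC addrA subrK.
rewrite two in elt.
have step3 : (box_vol y (cst q))%:E = ((2 ^+ d.+1)%:E *
    (vfact (fun i => q - y i) * ((2%:~R : R) ^- d.+1))%:E)%E.
  rewrite -EFinM step2 mulrCA mulfV ?mulr1 //.
apply: (le_trans step1); rewrite step3; apply: lee_wpmul2l.
  by rewrite lee_fin exprn_ge0.
apply: (le_trans elt).
have -> : int_range (Iv + 1) (Jv + 1) = (Iv + 1) :: [seq (Iv + 1) + (j%:Z) | j <- iota 1 (absz (Jv - Iv))].
  rewrite /int_range lerD2r IJ.
  have -> : absz (Jv + 1 - (Iv + 1) + 1) = (absz (Jv - Iv)).+1.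
    have e1 : Jv + 1 - (Iv + 1) + 1 = (Jv - Iv) + 1 by rewrite opprD addrACA subrr addr0.
    have j0 : 0 <= Jv - Iv by rewrite subr_ge0.
    apply/eqP; rewrite -eqz_nat -addn1 PoszD e1 !gez0_abs //.
    by rewrite addr_ge0.
  by rewrite /= addr0.
rewrite big_cons; apply: esqrt_ge; first exact: lambda_ge0.
by apply: sume_ge0 => t _; apply: mule_ge0; apply: lambda_ge0.
Qed.
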